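(* Let $\Omega$ be a topological signature and $A$ a Stone topological $\Omega$-algebra. Then $A$ is profinite if and only if, for every clopen subset $L$ of $A$, the syntactic congruence $\sigma_L^A$ is a clopen subset of $A\times A$.
   Context: A topological $\Omega$-algebra is a topological space $A$ with continuous evaluation maps $E_n^A:\Omega_n\times A^n\to A$, where $\Omega=\biguplus_n\Omega_n$ is a signature of topological spaces. A Stone topological algebra is one whose underlying space is compact (Hausdorff) and 0-dimensional. $A$ is profinite if it is compact and for any two distinct elements there is a continuous homomorphism into a finite discrete $\Omega$-algebra separating them. For $L\subseteq A$, the syntactic congruence $\sigma_L^A$ is the largest congruence on $A$ saturating $L$ (i.e., such that $L$ is a union of its classes); equivalently, $(a,a')\in\sigma_L^A$ iff for every translation $f$ of $A$, $f(a)\in L\iff f(a')\in L$, where a translation is a map $a\mapsto t_A(a_1,\dots,a_{i-1},a,a_{i+1},\dots,a_m)$ given by a term $t$ in which the variable $x_i$ occurs exactly once and fixed $a_j\in A$. *)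

(* Defs.v *)
From HB Require Import structures.
From mathcomp Require Import all_boot all_order all_algebra.
From mathcomp Require Import all_classical all_reals all_analysis.
Set Implicit Arguments. Unset Strict Implicit. Unset Printing Implicit Defensive.
Local Open Scope classical_set_scope.

(* A topological signature: Omega n is the topological space of n-ary
   operation symbols.  A^n carries the product topology {ptws 'I_n -> A}. *)
Definition signature := nat -> topologicalType.

Definition top_algebra (Omega : signature) (A : topologicalType)
  (E : forall n : nat, Omega n * {ptws 'I_n -> A} -> A) : Prop :=
  forall n, continuous (E n).

Definition zero_dim (T : topologicalType) : Prop :=
  forall (U : set T) (x : T), open U -> U x ->
    exists V : set T, [/\ clopen V, V x & V `<=` U].

Definition stone_space (T : topologicalType) : Prop :=
  [/\ compact [set: T], hausdorff_space T & zero_dim T].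

Definition is_hom (Omega : signature) (A B : topologicalType)
  (EA : forall n : nat, Omega n * {ptws 'I_n -> A} -> A)
  (EB : forall n : nat, Omega n * {ptws 'I_n -> B} -> B) (h : A -> B) : Prop :=
  forall n (w : Omega n) (a : 'I_n -> A),
    h (EA n (w, a)) = EB n (w, (fun i => h (a i)) : {ptws 'I_n -> B}).

Definition profinite (Omega : signature) (A : topologicalType)
  (EA : forall n : nat, Omega n * {ptws 'I_n -> A} -> A) : Prop :=
  compact [set: A] /\
  forall x y : A, x <> y ->
    exists (B : finType)
      (EB : forall n : nat, Omega n * {ptws 'I_n -> discrete_topology B} ->
                            discrete_topology B),
      top_algebra EB /\
      exists h : A -> discrete_topology B,
        [/\ continuous h, is_hom EA EB h & h x <> h y].

Definition is_congruence (Omega : signature) (A : topologicalType)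
  (EA : forall n : nat, Omega n * {ptws 'I_n -> A} -> A)
  (theta : A -> A -> Prop) : Prop :=
  [/\ (forall a, theta a a),
      (forall a b, theta a b -> theta b a),
      (forall a b c, theta a b -> theta b c -> theta a c) &
      (forall n (w : Omega n) (a b : 'I_n -> A),
          (forall i, theta (a i) (b i)) ->
          theta (EA n (w, a)) (EA n (w, b)))].

Definition saturates (A : Type) (theta : A -> A -> Prop) (L : set A) : Prop :=
  forall a b, theta a b -> L a -> L b.

Definition syntactic_congruence (Omega : signature) (A : topologicalType)
  (EA : forall n : nat, Omega n * {ptws 'I_n -> A} -> A) (L : set A)
  (a a' : A) : Prop :=
  exists theta, [/\ is_congruence EA theta, saturates theta L & theta a a'].

(* Main.v *)
Require Import Defs.
From HB Require Import structures.
From mathcomp Require Import all_boot all_order all_algebra.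
From mathcomp Require Import all_classical all_reals all_analysis.
From Stdlib Require Import Relations.
Local Open Scope classical_set_scope.
Unset Implicit Arguments.

Definition pt {T : topologicalType} (x : T) : Type := T.
HB.instance Definition _ (T : topologicalType) (x : T) := Topological.copy (pt x) T.
HB.instance Definition _ (T : topologicalType) (x : T) := isPointed.Build (pt x) x.
Lemma compact_cover' (T : topologicalType) (x : T) (S : set T) : compact S -> cover_compact S.
Proof.
move=> cS; have := @compact_cover (pt x); move=> E.
have : @compact (pt x) S by exact: cS.
rewrite E; exact.
Qed.

Section SC.
Variables (Omega : signature) (A : topologicalType)
  (EA : forall n : nat, Omega n * {ptws 'I_n -> A} -> A) (L : set A).
Local Notation sg := (syntactic_congruence EA L).

Lemma sc_refl a : sg a a.
Proof.
exists (@eq A); split => //.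
split => //; first by move=> ? ? ? -> ->.
by move=> n w a0 b0 H; have -> : a0 = b0 by apply: funext.
by move=> ? ? -> .
Qed.

Lemma sc_sym a b : sg a b -> sg b a.
Proof.
case=> th [[r s t c] sat hab]; exists (fun x y => th y x); split => //.
- split.
  + by move=> ?; apply: r.
  + by move=> ? ? /s.
  + by move=> ? ? ? H1 H2; exact: t H2 H1.
  + by move=> n w a0 b0 H; apply: c.
- by move=> x y /s; exact: sat.
Qed.

Lemma sc_sat a b : sg a b -> L a -> L b.
Proof. by case=> th [_ sat h]; apply: sat. Qed.

Definition upd {n} (k : nat) (a : 'I_n -> A) (x : A) : 'I_n -> A :=
  fun i => if val i == k then x else a i.

Lemma sc_step n (w : Omega n) k (a : 'I_n -> A) x y : sg x y ->
  sg (EA n (w, upd k a x)) (EA n (w, upd k a y)).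
Proof.
case=> th [[r s t c] sat hxy]; exists th; split => //.
apply: c => i; rewrite /upd; case: ifP => _ //.
Qed.

Local Notation R := (clos_refl_trans A sg).

Lemma R_step n (w : Omega n) k (a : 'I_n -> A) x y : R x y ->
  R (EA n (w, upd k a x)) (EA n (w, upd k a y)).
Proof.
elim=> [u v huv|u|u v z _ IH1 _ IH2].
- by apply: rt_step; apply: sc_step.
- exact: rt_refl.
- exact: rt_trans IH1 IH2.
Qed.

Lemma R_compat n (w : Omega n) (a b : 'I_n -> A) : (forall i, R (a i) (b i)) ->
  R (EA n (w, a)) (EA n (w, b)).
Proof.
move=> H.
suff: forall k (a : 'I_n -> A), (forall i, R (a i) (b i)) ->
   (forall i, (k <= val i)%N -> a i = b i) -> R (EA n (w, a)) (EA n (w, b)).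
  move=> G; apply: (G n a H) => i; by rewrite leqNgt ltn_ord.
elim=> [|k IH] a0 H0 E0.
  have -> : a0 = b by apply: funext => i; apply: E0.
  exact: rt_refl.
have [kn|kn] := ltnP k n.
  pose i0 := Ordinal kn.
  have Ea : a0 = upd k a0 (a0 i0).
    apply: funext => i; rewrite /upd; case: eqP => // ei.
    by congr a0; apply: val_inj.
  have Eb : upd k a0 (b i0) = fun i => if val i == k then b i else a0 i.
    apply: funext => i; rewrite /upd; case: eqP => // ei.
    by congr b; apply: val_inj.
  apply: rt_trans (_ : R _ (EA n (w, upd k a0 (b i0)))) _.
    by rewrite {1}Ea; apply: R_step.
  rewrite Eb; apply: IH.
    by move=> i; case: eqP => _; [apply: rt_refl|].
  move=> i ki; case: eqP => // /eqP ne; apply: E0.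
  by rewrite ltn_neqAle eq_sym ne ki.
apply: IH => // i ki; apply: E0.
by have := leq_trans (ltn_ord i) kn; rewrite ltnNge ki.
Qed.

Lemma R_cong : is_congruence EA R.
Proof.
split.
- by move=> ?; apply: rt_refl.
- move=> a b; elim=> [u v /sc_sym h|u|u v z _ IH1 _ IH2].
  + exact: rt_step.
  + exact: rt_refl.
  + exact: rt_trans IH2 IH1.
- by move=> a b c; apply: rt_trans.
- by move=> n w a b; apply: R_compat.
Qed.

Lemma R_sat : saturates R L.
Proof.
move=> a b; elim=> [u v h|u|u v z _ IH1 _ IH2] //.
- exact: sc_sat.
- by move=> /IH1 /IH2.
Qed.

Lemma sc_trans a b c : sg a b -> sg b c -> sg a c.
Proof.
move=> h1 h2; exists R; split; [exact: R_cong|exact: R_sat|].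
by apply: rt_trans (rt_step _ _ _ _ h1) (rt_step _ _ _ _ h2).
Qed.

Lemma sc_cong : is_congruence EA sg.
Proof.
split; [exact: sc_refl|exact: sc_sym|exact: sc_trans|].
move=> n w a b h; exists R; split; [exact: R_cong|exact: R_sat|].
by apply: R_compat => i; apply: rt_step.
Qed.

Lemma sc_max th : is_congruence EA th -> saturates th L ->
  forall a b, th a b -> sg a b.
Proof. by move=> c s a b h; exists th. Qed.
End SC.

Lemma near_all (T : topologicalType) (I : eqType) (s : seq I) (u : T)
  (P : I -> set T) : (forall i, i \in s -> nbhs u (P i)) ->
  nbhs u (fun v => forall i, i \in s -> P i v).
Proof.
elim: s => [|j s IH] H.
  by apply: filterS filterT => v _ i.
have hs : forall i, i \in s -> nbhs u (P i).
  by move=> i hi; apply: H; rewrite inE hi orbT.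
apply: filterS (filterI (H j (mem_head _ _)) (IH hs)) => v [pj ps] i.
by rewrite inE => /orP [/eqP -> | /ps].
Qed.

Lemma prod_nbhsP (T U : topologicalType) (p : T * U) (S : set (T * U)) :
  nbhs p S -> exists Q R, [/\ nbhs p.1 Q, nbhs p.2 R & forall a b, Q a -> R b -> S (a, b)].
Proof.
case=> [[Q R]] /= [Qp Rp] sub; exists Q, R; split => // a b qa rb.
by apply: sub.
Qed.

Lemma prod_nbhsI (T U : topologicalType) (p : T * U) (S : set (T * U)) Q R :
  nbhs p.1 Q -> nbhs p.2 R -> (forall a b, Q a -> R b -> S (a, b)) -> nbhs p S.
Proof.
move=> hQ hR sub; exists (Q, R) => //= [[a b]] [/= qa rb]; exact: sub.
Qed.

Lemma to_discrete (T : topologicalType) (D : choiceType) (g : T -> discrete_topology D) t :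
  nbhs t (g @^-1` [set g t]) -> g @ nbhs t --> g t.
Proof. by move=> H; apply/discrete_cvg. Qed.
Lemma from_discrete (T : topologicalType) (D : choiceType) (g : T -> discrete_topology D) t :
  g @ nbhs t --> g t -> nbhs t (g @^-1` [set g t]).
Proof. by move/discrete_cvg. Qed.

Section Back.
Variables (Omega : signature) (A : topologicalType)
  (EA : forall n : nat, Omega n * {ptws 'I_n -> A} -> A).
Hypothesis hEA : top_algebra EA.
Hypothesis cA : compact [set: A].

Lemma back (L : set A) :
  clopen [set p : A * A | syntactic_congruence EA L p.1 p.2] ->
  forall x y, L x -> ~ L y ->
    exists (B : finType)
      (EB : forall n : nat, Omega n * {ptws 'I_n -> discrete_topology B} ->
                            discrete_topology B),
      top_algebra EB /\
      exists h : A -> discrete_topology B,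
        [/\ continuous h, is_hom EA EB h & h x <> h y].
Proof.
move=> [oS _] x y Lx nLy.
set sg := syntactic_congruence EA L.
have [_ sym trans compat] := sc_cong Omega A EA L.
have cls : forall u, nbhs u (sg u).
  move=> u; have : nbhs (u, u) [set p : A * A | sg p.1 p.2].
    by move: oS; rewrite openE => /(_ (u, u) (sc_refl _ _ _ _ u)).
  move=> /prod_nbhsP [Q [R [hQ hR sub]]].
  by apply: filterS hR => b rb; apply: (sub u b (nbhs_singleton hQ) rb).
have opn : forall a, open (sg a).
  move=> a; rewrite openE => b hab; apply: filterS (cls b) => c hbc.
  exact: trans hab hbc.
have := compact_cover' _ x _ cA => /(_ A setT (fun a => sg a)) [].
- by move=> a _; apply: opn.
- by move=> a _; exists a => //; apply: sc_refl.
move=> D _ cov.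
pose reps : seq A := finmap.enum_fset D.
have cov' : forall a, exists2 r, r \in reps & sg r a.
  move=> a; have [r rD hr] := cov a I; exists r => //.
pose P a := fun r => `[< sg r a >].
have hlt : forall a, (find (P a) reps < size reps)%N.
  move=> a; rewrite -has_find; apply/hasP.
  have [r rin hr] := cov' a; exists r => //; exact/asboolP.
pose h a : 'I_(size reps).+1 := inord (find (P a) reps).
have hval : forall a, val (h a) = find (P a) reps.
  by move=> a; rewrite /h /= inordK // ltnS; exact: ltnW (hlt a).
have hE : forall a b, h a = h b <-> sg a b.
  move=> a b; split.
    move=> e; have e' : find (P b) reps = find (P a) reps by rewrite -!hval e.
    have /asboolP ha := nth_find x (etrans (has_find _ _) (hlt a)).
    have /asboolP hb := nth_find x (etrans (has_find _ _) (hlt b)).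
    rewrite e' in hb.
    exact: trans (sym _ _ ha) hb.
  move=> hab; rewrite /h; congr inord; apply: eq_find => r; rewrite /P.
  apply/asboolP/asboolP => hr; [exact: trans hr hab|exact: trans hr (sym _ _ hab)].
pose rep (j : 'I_(size reps).+1) : A := nth x reps j.
have hrep : forall a, sg (rep (h a)) a.
  move=> a; rewrite /rep hval.
  exact/asboolP/(nth_find x (etrans (has_find _ _) (hlt a))).
pose B := 'I_(size reps).+1.
pose EB := fun n (p : Omega n * {ptws 'I_n -> discrete_topology B}) =>
  (h (EA n (p.1, (fun i => rep (p.2 i)) : {ptws 'I_n -> A})) : discrete_topology B).
exists B, EB; split.
  move=> n [w f]; apply: to_discrete.
  have fs : nbhs f [set f].
    have : nbhs f (fun g => forall i, i \in enum 'I_n -> [set g : {ptws 'I_n -> discrete_topology B} | g i = f i] g).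
      apply: near_all => i _.
      exact: (from_discrete _ _ _ _ (@proj_continuous _ (fun _ : 'I_n => discrete_topology B) i f)).
    apply: filterS => g hg; apply: funext => i; apply: hg; exact: mem_enum.
  set c := EA n (w, (fun i => rep (f i)) : {ptws 'I_n -> A}).
  have := hEA n (w, (fun i => rep (f i)) : {ptws 'I_n -> A}) (sg c) (cls c).
  move=> /prod_nbhsP [Q [R [hQ hR sub]]].
  apply: (prod_nbhsI _ _ (w, f) _ Q [set f] hQ fs) => w' f' qw' ->.
  rewrite /= /EB /=; apply/hE; apply: sym; exact: sub qw' (nbhs_singleton hR).
exists h; split.
- move=> u; apply: to_discrete; apply: filterS (cls u) => v huv.
  by apply/hE; apply: sym.
- move=> n w a; rewrite /EB /=; apply/hE.
  by apply: compat => i; apply: sym; apply: hrep.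
- move/hE => s; apply: nLy; exact: sc_sat _ _ _ _ _ _ s Lx.
Qed.
End Back.

Lemma compact_cover2 (T : topologicalType) (S : set T) : compact S -> cover_compact S.
Proof.
move=> cS; case: (pselect (exists x, S x)) => [[x _]|nS].
  exact: compact_cover' _ x _ cS.
move=> I D f _ _; exists finmap.fset0; first by move=> ?; rewrite finmap.in_fset0.
by move=> p Sp; exfalso; apply: nS; exists p.
Qed.

Section Fwd.
Variables (Omega : signature) (A : topologicalType)
  (EA : forall n : nat, Omega n * {ptws 'I_n -> A} -> A).

Lemma fwd : profinite EA -> forall L : set A, clopen L ->
  clopen [set p : A * A | syntactic_congruence EA L p.1 p.2].
Proof.
move=> [cA sep] L [oL cL].
set sg := syntactic_congruence EA L.
have [_ sym trans _] := sc_cong Omega A EA L.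
have kern : forall p : A * A, exists k : A -> A -> Prop, p.1 <> p.2 ->
    [/\ is_congruence EA k, (forall u, nbhs u (k u)) & ~ k p.1 p.2].
  move=> [a b]; case: (pselect (a = b)) => [e|ne].
    by exists (fun _ _ => True).
  have [B [EB [_ [h [hc hh hne]]]]] := sep a b ne.
  exists (fun u v => h u = h v) => _; split => //.
  - split.
    + by [].
    + by move=> ? ? ->.
    + by move=> ? ? ? -> ->.
    + move=> n w a0 b0 e; rewrite /= hh hh; congr (EB n (w, _)).
      exact: funext.
  - move=> u; apply: filterS (from_discrete _ _ h u (hc u)) => v /= ->.
    by [].
have [k hk] := choice kern.
set K := L `*` ~` L.
have cK : compact K.
  apply: compact_setX.
    exact: (subclosed_compact cL cA (fun _ _ => I)).
  have cLc : closed (~` L) by rewrite closedC.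
  exact: (subclosed_compact cLc cA (fun _ _ => I)).
have hK : forall p, K p -> p.1 <> p.2 by move=> [a b] [/= La nLb] e; apply: nLb; rewrite -e.
have := compact_cover2 _ _ cK (A * A)%type K
  (fun p => [set q : A * A | k p p.1 q.1 /\ k p p.2 q.2]).
case.
- move=> p Kp; have [[_ _ tr _] cls _] := hk p (hK p Kp).
  rewrite openE => q [h1 h2].
  apply: (prod_nbhsI _ _ q _ (k p q.1) (k p q.2) (cls _) (cls _)) => a b qa rb.
  by split; [exact: tr h1 qa|exact: tr h2 rb].
- move=> p Kp; exists p => //; have [[r _ _ _] _ _] := hk p (hK p Kp).
  by split; apply: r.
move=> D' subD cov.
pose s := finmap.enum_fset D'.
pose th u v := forall p, p \in s -> k p u v.
have hks : forall p, p \in s -> [/\ is_congruence EA (k p), (forall u, nbhs u (k p u)) & ~ k p p.1 p.2].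
  by move=> p ps; apply: hk; apply: hK; apply/set_mem; exact: subD.
have thc : is_congruence EA th.
  split.
  - by move=> a p /hks [[r _ _ _] _ _].
  - by move=> a b h p /[dup] /hks [[_ sy _ _] _ _] /h; apply: sy.
  - by move=> a b c h1 h2 p /[dup] /hks [[_ _ tr _] _ _] ps; apply: tr (h1 p ps) (h2 p ps).
  - move=> n w a b h p /[dup] /hks [[_ _ _ cp] _ _] ps.
    by apply: cp => i; apply: h.
have ths : saturates th L.
  move=> u v h Lu; apply: contrapT => nLv.
  have [p pD [h1 h2]] := cov (u, v) (conj Lu nLv).
  have [[_ sy tr _] _ nk] := hks p pD.
  apply: nk; exact: tr _ _ _ (tr _ _ _ h1 (h p pD)) (sy _ _ h2).
have thsg : forall a b, th a b -> sg a b by apply: sc_max.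
have thn : forall u, nbhs u (th u).
  by move=> u; apply: near_all => p /hks [_ cls _].
split.
- rewrite openE => [[a b]] /= hab.
  apply: (prod_nbhsI _ _ (a, b) _ (th a) (th b) (thn a) (thn b)) => a' b' ha hb /=.
  exact: trans (sym _ _ (thsg _ _ ha)) (trans _ _ _ hab (thsg _ _ hb)).
- rewrite -[X in closed X]setCK closedC openE => [[a b]] /= hab.
  apply: (prod_nbhsI _ _ (a, b) _ (th a) (th b) (thn a) (thn b)) => a' b' ha hb /= h'.
  apply: hab; exact: trans (thsg _ _ ha) (trans _ _ _ h' (sym _ _ (thsg _ _ hb))).
Qed.
End Fwd.

Theorem theorem2p7 (Omega : signature) (A : topologicalType)
  (EA : forall n : nat, Omega n * {ptws 'I_n -> A} -> A) :
  top_algebra EA -> stone_space A ->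
  (profinite EA <->
   forall L : set A, clopen L ->
     clopen [set p : A * A | syntactic_congruence EA L p.1 p.2]).
Proof.
move=> hEA [cA hA zA]; split.
- exact: fwd.
- move=> H; split => // x y nxy.
  have nxy' : x != y by apply/eqP.
  have [U [oU xU yU]] := hausdorff_accessible hA nxy'.
  have [V [clV Vx VU]] := zA U x oU (set_mem xU).
  apply: (back Omega A EA hEA cA V (H V clV) x y Vx) => Vy.
  by move: yU; rewrite in_setE; apply; apply: VU.
Qed.
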